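(* Let $P$ be a knot projection on $S^2$ (possibly reducible), and let $P_B$ be the knot projection obtained from $P$ by applying the move $B$ at every crossing of $P$. Then $P_B$ is reduced.
   Context: A knot projection is a closed curve in $S^2$ that is the image of an immersion $S^1\to S^2$ whose only singularities are finitely many transverse double points (crossings), up to isotopy of $S^2$. A crossing $c$ is reducible if the four corners of $S^2\setminus P$ at $c$ do not lie in four pairwise distinct regions; $P$ is reduced if it has no reducible crossing. Move $B$ at a crossing $c$: choose an orientation of $P$; in a small disk around $c$, $P$ is drawn as two arcs, both traversed from left to right, crossing once (shadow of the braid generator $\sigma_1$ with the braid running horizontally); $B$ replaces this by two arcs with the same endpoints, both traversed left to right, crossing three times in succession (shadow of $\sigma_1^3$, forming two consecutive bigons), unchanged outside the disk. This is independent of the chosen orientation. *)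

(* Defs.v *)
(* Knot projections on S^2 are encoded combinatorially as
   oriented combinatorial maps (rotation systems) of 4-regular plane graphs. *)
From mathcomp Require Import all_boot.
#[global] Set Warnings "-notation-overridden".
Set Implicit Arguments. Unset Strict Implicit. Unset Printing Implicit Defensive.

Section KnotProjection.
Variable D : finType.        (* darts = half-edges; 4 per crossing *)
Variables (sigma alpha : D -> D).
(* sigma : counterclockwise rotation of the darts around their crossing
           (orientation of S^2);
   alpha : the involution pairing the two darts of an edge. *)

(* straight-ahead step: follow the edge, then continue through the crossing
   to the opposite dart (sigma^2). *)
Definition straight (x : D) : D := sigma (sigma (alpha x)).

(* face permutation; the corner between x and sigma x at a crossing lies in
   the region (face) given by the phi-orbit of sigma x. *)
Definition facep (x : D) : D := sigma (alpha x).

(* A knot projection with #|D|/4 crossings: a connected 4-regular map of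
   genus 0 (Euler: V - E + F = 2, i.e. F = #|D|/4 + 2) whose straight-ahead
   walks form a single closed curve.  The empty map (#|D| = 0) stands for the
   crossingless simple closed curve. *)
Definition is_knot_projection : Prop :=
  [/\ injective sigma,
      forall x, sigma (sigma (sigma (sigma x))) = x,
      forall x, sigma (sigma x) != x &
      forall x, alpha (alpha x) = x /\ alpha x != x] /\
  [/\ forall x y, connect (fun a b => (b == sigma a) || (b == alpha a)) x y,
      (0 < #|D| -> fcard facep predT = #|D| %/ 4 + 2) &
      forall x y, fconnect straight x y || fconnect straight x (alpha y)].

(* region containing the k-th corner (between sigma^k d and sigma^(k+1) d)
   at the crossing of d is the facep-orbit of sigma^(k+1) d. *)
Definition corner_rep (d : D) (k : nat) : D := iter k.+1 sigma d.

(* the crossing of d is reducible iff two of its four corners lie in the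
   same region *)
Definition reducible_at (d : D) : bool :=
  [exists i : 'I_4, exists j : 'I_4,
     (i != j) && fconnect facep (corner_rep d i) (corner_rep d j)].

Definition reduced : Prop := forall d : D, ~~ reducible_at d.

(* An orientation of the curve is given by a dart d0: the darts in the
   straight-orbit of d0 are the "outgoing" darts.  At each crossing the two
   incoming darts (NW, SW = sigma NW) are on the left, the outgoing ones
   (NE, SE) on the right, both strands running left to right.  The roles:
     out x, out (sigma x) = false,false : NW   | false,true : SW
                          = true,false  : NE   | true,true  : SE
   Each crossing (darts NE,NW,SW,SE) is replaced by three crossings
   c1 c2 c3 in a row (shadow of sigma_1^3):
     c1 = (NW1, NW0, SW0, SW1), c2 = (NE2, NW2, SW2, SE2),
     c3 = (NE0, NE1, SE1, SE0)          (counterclockwise)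
   with edges (x,0)-(alpha x,0) (old edges) and (x,1)-(x,2) (new edges). *)
Variable d0 : D.
Definition outgoing (x : D) : bool := fconnect straight d0 x.

Definition B_sigma (p : D * 'I_3) : D * 'I_3 :=
  let: (x, k) := p in
  match val k with
  | 0 => if outgoing x == outgoing (sigma x) then (sigma x, ord0)
         else (x, inord 1)
  | 1 => if outgoing x == outgoing (sigma x) then (x, ord0)
         else (sigma (sigma (sigma x)), inord 1)
  | _ => (sigma x, inord 2)
  end.

Definition B_alpha (p : D * 'I_3) : D * 'I_3 :=
  let: (x, k) := p in
  match val k with
  | 0 => (alpha x, ord0)
  | 1 => (x, inord 2)
  | _ => (x, inord 1)
  end.

End KnotProjection.

(* Main.v *)
From HB Require Import structures.
Require Import Defs.
From mathcomp Require Import all_boot.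
From mathcomp Require Import all_order all_algebra ring zify lra.
Import GRing.Theory Num.Theory.
Local Open Scope ring_scope.
Set Implicit Arguments. Unset Strict Implicit.

Section Gen.
Variable K : fieldType.
Variables aT rT : vectType K.
Lemma lfunE' (f : aT -> rT) (lf : linear f) u : linfun f u = f u.
Proof.
pose fl : {linear aT -> rT} := HB.pack f (GRing.isLinear.Build _ _ _ _ f lf).
exact: (lfunE fl u).
Qed.
End Gen.
Arguments lfunE' {K aT rT f}.

Section LAgen.
Variable D : finType.
Local Notation U := {ffun D -> rat^o}.

Definition ip (u v : U) : rat := \sum_x (u x : rat) * v x.

Lemma ip_eq0 u : ip u u = 0 -> u = 0.
Proof.
move=> /eqP; rewrite psumr_eq0 => [/allP H|x _]; last by rewrite -expr2 sqr_ge0.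
apply/ffunP=> x; rewrite ffunE; have := H x; rewrite mem_index_enum => /(_ isT).
by rewrite mulf_eq0 orbb => /eqP.
Qed.

Lemma ip_sym u v : ip u v = ip v u.
Proof. by apply: eq_bigr => x _; rewrite mulrC. Qed.

Lemma ip0r u : ip u 0 = 0.
Proof. by rewrite /ip big1 // => x _; rewrite ffunE mulr0. Qed.

Lemma ipDr u v w : ip u (v + w) = ip u v + ip u w.
Proof. by rewrite /ip -big_split; apply: eq_bigr => x _; rewrite ffunE mulrDr. Qed.

Lemma dimU : \dim (fullv : {vspace U}) = #|D|.
Proof. by rewrite dimvf /dim /= muln1. Qed.

Lemma adj_rank (f g : 'End(U)) : (forall u w, ip (f u) w = ip u (g w)) ->
  (\dim (f @: fullv) <= \dim (g @: fullv))%N.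
Proof.
move=> adj; apply: leq_trans (dimvS (limgS g (subvf (f @: fullv)))).
suff H : (limg f :&: lker g = 0)%VS by rewrite (limg_dim_eq H).
apply/eqP; rewrite -subv0; apply/subvP => y.
rewrite memv_cap memv_ker => /andP[/memv_imgP[z _ ->] /eqP Hg]; rewrite memv0.
by apply/eqP/ip_eq0; rewrite adj Hg ip0r.
Qed.

Definition Iv (p : D -> D) (u : U) : U := [ffun x => u (p x) - u x].
Lemma Iv_lin p : linear (Iv p).
Proof. move=> a u v; apply/ffunP=> x; rewrite !ffunE /GRing.scale /=; ring. Qed.

Lemma memInv p (u : U) : (u \in lker (linfun (Iv p))) = [forall x, u (p x) == u x].
Proof.
rewrite memv_ker (lfunE' (Iv_lin p)); apply/eqP/forallP => [H x|H].
  by have := congr1 (fun f : U => f x) H; rewrite !ffunE => /eqP; rewrite subr_eq0.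
by apply/ffunP=> x; rewrite !ffunE (eqP (H x)) subrr.
Qed.

Section DimInv.
Variable p : D -> D.
Hypothesis pinj : injective p.
Let R := {x : D | froots p x}.
Let symp := fconnect_sym pinj.
Definition rt (x : D) : R := exist _ (froot p x) (roots_root symp x).
Definition iota (c : {ffun R -> rat^o}) : U := [ffun x => c (rt x)].
Lemma iota_lin : linear iota.
Proof. move=> a u v; apply/ffunP=> x; rewrite !ffunE /GRing.scale /=; ring. Qed.

Lemma rt_p x : rt (p x) = rt x.
Proof. apply: val_inj => /=. have H := @fingraph.rootP D (frel p) symp x (p x). by symmetry; apply/H; apply: fconnect1. Qed.

Lemma dim_inv : \dim (lker (linfun (Iv p))) = fcard p predT.
Proof.
have -> : lker (linfun (Iv p)) = (linfun iota @: fullv)%VS.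
  apply/vspaceP => h; rewrite memInv; apply/forallP/memv_imgP => [H|[c _ ->] x].
    exists [ffun r : R => h (val r)]; first exact: memvf.
    apply/ffunP => x; rewrite (lfunE' iota_lin) !ffunE /=.
    have Hi : invariant p h =1 xpredT by move=> y; exact: (H y).
    exact: (fconnect_invariant Hi (connect_root _ x)).
  by rewrite (lfunE' iota_lin) !ffunE rt_p.
rewrite limg_dim_eq; last first.
  apply/eqP; rewrite -subv0; apply/subvP => c; rewrite memv_cap memv_ker.
  case/andP=> _; rewrite (lfunE' iota_lin) => /eqP H; rewrite memv0; apply/eqP.
  apply/ffunP => r; have := congr1 (fun f : U => f (val r)) H; rewrite !ffunE.
  suff -> : rt (val r) = r by [].
  by apply: val_inj => /=; apply/eqP; case: r.
rewrite dimvf /dim /= muln1 card_sig; apply: eq_card => x.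
by rewrite !inE andbT.
Qed.
End DimInv.
End LAgen.


Section Main.
Variables (D : finType) (sigma alpha : D -> D) (x0 : D).
Hypotheses (sinj : injective sigma)
  (s4 : forall x, sigma (sigma (sigma (sigma x))) = x)
  (s2 : forall x, sigma (sigma x) != x)
  (aa : forall x, alpha (alpha x) = x) (a1 : forall x, alpha x != x)
  (conn : forall x y, connect (fun a b => (b == sigma a) || (b == alpha a)) x y)
  (Fc : fcard (facep sigma alpha) predT = (#|D| %/ 4 + 2)%N).
Variable eps : D -> rat.
Hypotheses (epsA : forall x, eps (alpha x) = - eps x)
  (epsS : forall x, eps x + eps (sigma x) + eps (sigma (sigma x)) + eps (sigma (sigma (sigma x))) = 0).

Local Notation U := {ffun D -> rat^o}.
Local Notation phi := (facep sigma alpha).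

Lemma ainj : injective alpha. Proof. exact: can_inj aa. Qed.
Lemma phiinj : injective phi.
Proof. by move=> x y; rewrite /facep => /sinj /ainj. Qed.

Lemma s_ne x : sigma x != x.
Proof. by apply/eqP => H; move: (s2 x); rewrite !H eqxx. Qed.
Lemma s3_ne x : sigma (sigma (sigma x)) != x.
Proof. by apply/eqP => H; move: (s_ne x); rewrite -{1}H s4 eqxx. Qed.

Lemma card_sigma : (fcard sigma predT * 4 = #|D|)%N.
Proof.
apply: (fcard_order_set sinj); last by move=> x y _.
apply/subsetP => x _; rewrite inE; apply/eqP.
apply: (@order_cycle _ _ [:: x; sigma x; sigma (sigma x); sigma (sigma (sigma x))]).
- by rewrite /= !eqxx s4 eqxx.
- rewrite /= !inE !negb_or -!andbA; apply/and5P; split.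
  + by rewrite eq_sym s_ne.
  + by rewrite eq_sym s2.
  + by rewrite eq_sym s3_ne.
  + by rewrite (inj_eq sinj) eq_sym s_ne.
  + by rewrite !(inj_eq sinj) eq_sym s2 eq_sym s_ne.
- by rewrite mem_head.
Qed.

Lemma card_alpha : (fcard alpha predT * 2 = #|D|)%N.
Proof.
apply: (fcard_order_set ainj); last by move=> x y _.
apply/subsetP => x _; rewrite inE; apply/eqP.
apply: (@order_cycle _ _ [:: x; alpha x]).
- by rewrite /= !eqxx aa eqxx.
- by rewrite /= !inE andbT eq_sym a1.
- by rewrite mem_head.
Qed.

Lemma root_phi x : froot phi (phi x) = froot phi x.
Proof.
have H := @fingraph.rootP D (frel phi) (fconnect_sym phiinj) x (phi x).
by symmetry; apply/H; apply: fconnect1.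
Qed.

Definition Ef (u : U) : U := [ffun x => u (froot phi x)].
Definition Esf (w : U) : U := [ffun r => \sum_(y | froot phi y == r) w y].
Definition Psf (u : U) : U :=
  [ffun x => u x + u (sigma x) + u (sigma (sigma x)) + u (sigma (sigma (sigma x)))].
Lemma Ef_lin : linear Ef.
Proof. move=> a u v; apply/ffunP=> x; rewrite !ffunE /GRing.scale /=; ring. Qed.
Lemma Psf_lin : linear Psf.
Proof. move=> a u v; apply/ffunP=> x; rewrite !ffunE /GRing.scale /=; ring. Qed.
Lemma Esf_lin : linear Esf.
Proof.
move=> a u v; apply/ffunP=> r; rewrite !ffunE /GRing.scale /= big_distrr -big_split.
by apply: eq_bigr => y _; rewrite !ffunE.
Qed.

Definition dA := linfun (Iv alpha).
Definition E := linfun Ef.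
Definition Es := linfun Esf.
Definition P := linfun Psf.
Definition G := (dA \o E)%VF.
Definition Gs := (Es \o dA)%VF.

Lemma dAE u : dA u = Iv alpha u. Proof. exact: lfunE' (Iv_lin alpha) u. Qed.
Lemma EE u : E u = Ef u. Proof. exact: lfunE' Ef_lin u. Qed.
Lemma EsE u : Es u = Esf u. Proof. exact: lfunE' Esf_lin u. Qed.
Lemma PE u : P u = Psf u. Proof. exact: lfunE' Psf_lin u. Qed.

Lemma ipdA u w : ip (dA u) w = ip u (dA w).
Proof.
rewrite /ip !dAE.
have -> : \sum_x ((Iv alpha u) x : rat) * w x =
          \sum_x (u (alpha x) : rat) * w x - \sum_x (u x : rat) * w x.
  by rewrite -sumrB; apply: eq_bigr => x _; rewrite ffunE mulrBl.
have -> : \sum_x (u x : rat) * (Iv alpha w) x =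
          \sum_x (u x : rat) * w (alpha x) - \sum_x (u x : rat) * w x.
  by rewrite -sumrB; apply: eq_bigr => x _; rewrite ffunE mulrBr.
congr (_ - _); rewrite (reindex_inj ainj) /=.
by apply: eq_bigr => x _; rewrite aa.
Qed.

Lemma ipE c w : ip (E c) w = ip c (Es w).
Proof.
symmetry; rewrite /ip.
under eq_bigr => r _ do rewrite EsE ffunE big_distrr.
rewrite (exchange_big_dep xpredT) //=.
apply: eq_bigr => y _; rewrite EE ffunE.
rewrite (eq_bigl (fun r => r == froot phi y)) ?big_pred1_eq // => r.
Qed.

Lemma adjG c w : ip (G c) w = ip c (Gs w).
Proof. by rewrite !comp_lfunE ipdA ipE. Qed.

Definition one : U := [ffun _ => 1].

Lemma const_dim (W : {vspace U}) :
  (forall h, h \in W -> (forall x, h (sigma x) = h x) /\ (forall x, h (alpha x) = h x)) ->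
  (\dim W <= 1)%N.
Proof.
move=> HW; apply: (@leq_trans (\dim <[one]>)); last by rewrite dim_vline leq_b1.
apply: dimvS; apply/subvP => h /HW [Hs Ha]; apply/vlineP; exists (h x0).
apply/ffunP => x; rewrite !ffunE /GRing.scale /= mulr1.
pose a := [pred z | h z == h x0].
have cl : closed (fun a b => (b == sigma a) || (b == alpha a)) a.
  by move=> y z /orP[] /eqP ->; rewrite !inE ?Hs ?Ha.
have := closed_connect cl (conn x0 x); rewrite !inE eqxx => /esym /eqP.
done.
Qed.

Lemma Einv c x : E c (phi x) = E c x.
Proof. by rewrite EE !ffunE root_phi. Qed.

Lemma Pinv g x : P g (sigma x) = P g x.
Proof. rewrite PE !ffunE s4; ring. Qed.

Lemma memSym u : (u \in lker dA) = [forall x, u (alpha x) == u x].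
Proof. exact: memInv. Qed.

Lemma sum_sinv (u : U) : (forall x, u (sigma x) = u x) ->
  \sum_x (u x : rat) * eps x = 0.
Proof.
move=> Hu; set T := \sum_x _.
have R1 (f : D -> rat) : \sum_x (u x : rat) * f x = \sum_x (u x : rat) * f (sigma x).
  by rewrite (reindex_inj sinj) /=; apply: eq_bigr => x _; rewrite Hu.
have e1 : T = \sum_x (u x : rat) * eps (sigma x) by exact: (R1 eps).
have e2 : T = \sum_x (u x : rat) * eps (sigma (sigma x)) by rewrite e1; exact: (R1 (fun x => eps (sigma x))).
have e3 : T = \sum_x (u x : rat) * eps (sigma (sigma (sigma x))) by rewrite e2; exact: (R1 (fun x => eps (sigma (sigma x)))).
have : 4%:R * T = 0.
  have -> : 4%:R * T = T + T + T + T by ring.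
  rewrite {2}e1 {2}e2 {2}e3 /T -!big_split /=.
  by rewrite big1 // => x _; rewrite -!mulrDr epsS mulr0.
by move/eqP; rewrite mulf_eq0 pnatr_eq0 /= => /eqP.
Qed.

Lemma LA_main : exists h : D -> rat,
  (forall x, h (phi x) = h x) /\ (forall x, h (alpha x) = h x + eps x).
Proof.
have n4 := card_sigma; have n2 := card_alpha.
have EU : (lker (linfun (Iv phi)) <= E @: fullv)%VS.
  apply/subvP => h; rewrite memInv => /forallP H; apply/memv_imgP; exists h.
    exact: memvf.
  apply/ffunP => x; rewrite EE ffunE.
  have Hi : invariant phi h =1 xpredT by move=> y; exact: (H y).
  exact: (fconnect_invariant Hi (connect_root _ x)).
have capE : (\dim (E @: fullv :&: lker dA) <= 1)%N.
  apply: const_dim => h; rewrite memv_cap => /andP[/memv_imgP[c _ ->]].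
  rewrite memSym => /forallP Ha; split => x; last exact/eqP.
  by rewrite -{1}(aa x) -/(phi (alpha x)) Einv (eqP (Ha x)).
have rG1 : (fcard phi predT <= \dim (G @: fullv) + 1)%N.
  have := limg_ker_dim dA (E @: fullv); rewrite -limg_comp -/G.
  have := dimvS EU; rewrite (dim_inv phiinj); lia.
have rGs1 := adj_rank adjG.
have rGs2 : (\dim (Gs @: fullv) <= \dim (G @: fullv))%N.
  by apply: adj_rank => u w; rewrite ip_sym -adjG ip_sym.
have kGs := limg_ker_dim Gs fullv; rewrite capfv dimU in kGs.
set Sym := lker dA.
set Cob := (dA @: (P @: fullv))%VS.
have dSym : \dim Sym = fcard alpha predT by exact: dim_inv ainj.
have PU : (lker (linfun (Iv sigma)) <= P @: fullv)%VS.
  apply/subvP => h; rewrite memInv => /forallP H; apply/memv_imgP.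
  exists ((4%:R)^-1 *: h); first exact: memvf.
  apply/ffunP => x; rewrite PE !ffunE /GRing.scale /=.
  rewrite (eqP (H (sigma (sigma x)))) (eqP (H (sigma x))) (eqP (H x)); field; by [].
have capP : (\dim (P @: fullv :&: lker dA) <= 1)%N.
  apply: const_dim => h; rewrite memv_cap => /andP[/memv_imgP[g _ ->]].
  rewrite memSym => /forallP Ha; split => x; last exact/eqP.
  exact: Pinv.
have dCob : (fcard sigma predT <= \dim Cob + 1)%N.
  have := limg_ker_dim dA (P @: fullv).
  have := dimvS PU; rewrite (dim_inv sinj) -/Cob; lia.
have SC0 : (Sym :&: Cob = 0)%VS.
  apply/eqP; rewrite -subv0; apply/subvP => v; rewrite memv_cap memSym memv0.
  case/andP => /forallP Hs /memv_imgP[u _ Hv]; apply/eqP/ffunP => x.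
  have := eqP (Hs x); rewrite Hv !dAE !ffunE aa => H; lra.
have dSC := dimv_sum_cap Sym Cob; rewrite SC0 dimv0 addn0 in dSC.
have SCk : (Sym + Cob <= lker Gs)%VS.
  rewrite subv_add; apply/andP; split; apply/subvP => v.
    by rewrite !memv_ker comp_lfunE => /eqP ->; rewrite linear0.
  case/memv_imgP => w /memv_imgP[g _ ->] ->; rewrite memv_ker comp_lfunE.
  apply/eqP/ffunP => r; rewrite EsE !ffunE.
  set u := P g.
  have Hu x : u (sigma x) = u x by exact: Pinv.
  have -> : \sum_(y | froot phi y == r) dA (dA u) y =
            \sum_(y | froot phi y == r) 2%:R * ((u y : rat) - u (phi y)).
    apply: eq_bigr => y _; rewrite !dAE !ffunE aa /facep Hu /=; ring.
  rewrite -big_distrr /= sumrB.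
  rewrite [X in _ * (X - _) = _](reindex_inj phiinj) /=.
  rewrite (eq_bigl (fun y => froot phi y == r)); first by rewrite subrr mulr0.
  by move=> y; rewrite root_phi.
have kGs_eq : lker Gs = (Sym + Cob)%VS.
  apply/eqP; rewrite eq_sym eqEdim SCk /= dSC dSym.
  have F4 : (#|D| %/ 4)%N = fcard sigma predT by rewrite -n4 mulnK.
  rewrite Fc F4 in rG1; lia.
have GK0 : (G @: fullv :&: lker Gs = 0)%VS.
  apply/eqP; rewrite -subv0; apply/subvP => y.
  rewrite memv_cap memv_ker => /andP[/memv_imgP[z _ ->] /eqP Hg]; rewrite memv0.
  by apply/eqP/ip_eq0; rewrite adjG Hg ip0r.
have dec : (G @: fullv + lker Gs)%VS = fullv.
  apply/eqP; rewrite eqEdim subvf /= dimU.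
  have := dimv_sum_cap (G @: fullv) (lker Gs); rewrite GK0 dimv0; lia.
pose ev : U := [ffun x => eps x].
have : ev \in (G @: fullv + lker Gs)%VS by rewrite dec memvf.
case/memv_addP => i /memv_imgP[z _ ->] [j Hj Hev].
have Hj' := Hj; rewrite kGs_eq in Hj'.
case/memv_addP: Hj' => s Hs [c Hc Hjsc].
have ips : ip ev s = 0.
  move: Hs; rewrite memSym => /forallP Hs.
  have : ip ev s = - ip ev s.
    rewrite /ip -sumrN (reindex_inj ainj) /=; apply: congr_big => // x _.
    by rewrite !ffunE epsA (eqP (Hs x)) mulNr.
  by move=> ?; lra.
have ipc : ip ev c = 0.
  case/memv_imgP: Hc => w /memv_imgP[g _ ->] ->.
  rewrite ip_sym ipdA /ip.
  have Hu x : P g (sigma x) = P g x by exact: Pinv.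
  transitivity ((- 2%:R) * \sum_x (P g x : rat) * eps x); last first.
    by rewrite sum_sinv // mulr0.
  rewrite big_distrr /=; apply: eq_bigr => x _; rewrite dAE !ffunE epsA; ring.
have ipj : ip j j = 0.
  have H1 : ip ev j = 0 by rewrite Hjsc ipDr [ip ev s]ips [ip ev c]ipc addr0.
  have H2 : ip (G z) j = 0.
    by rewrite adjG; move: Hj; rewrite memv_ker => /eqP ->; rewrite ip0r.
  have : ip ev j = ip (G z) j + ip j j.
    by rewrite Hev ip_sym ipDr [ip j (G z)]ip_sym.
  by rewrite H1 H2 add0r.
have j0 := ip_eq0 ipj; rewrite j0 addr0 in Hev.
exists (fun x => E z x); split => x; first exact: Einv.
have := congr1 (fun f : U => f x) Hev; rewrite comp_lfunE dAE !ffunE => ->.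
ring.
Qed.

End Main.


Arguments B_sigma : simpl never.
Arguments B_alpha : simpl never.
Arguments outgoing : simpl never.

Section P2.
Variables (D : finType) (sigma alpha : D -> D) (d0 : D).
Hypotheses (sinj : injective sigma)
  (s4 : forall x, sigma (sigma (sigma (sigma x))) = x)
  (s2 : forall x, sigma (sigma x) != x)
  (aa : forall x, alpha (alpha x) = x) (a1 : forall x, alpha x != x)
  (single : forall x y, fconnect (straight sigma alpha) x y
                        || fconnect (straight sigma alpha) x (alpha y)).

Local Notation T := (straight sigma alpha).
Local Notation out := (outgoing sigma alpha d0).

Lemma Tinj : injective T.
Proof. by move=> x y; rewrite /straight => /sinj /sinj /(can_inj aa). Qed.

Lemma TaT y : T (alpha (T y)) = alpha y.
Proof. by rewrite /straight aa s4. Qed.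

Lemma iterTa m y : iter m T (alpha (iter m T y)) = alpha y.
Proof.
elim: m y => // m IH y.
by rewrite iterSr iterS TaT IH.
Qed.

Lemma iter_inj m : injective (iter m T).
Proof. elim: m => // m IH x y; rewrite !iterS => /Tinj; exact: IH. Qed.

Lemma outA x : out (alpha x) = ~~ out x.
Proof.
have := single d0 x; rewrite /outgoing.
case Ex : (fconnect T d0 x); case Ea : (fconnect T d0 (alpha x)) => //= _.
have : fconnect T x (alpha x).
  by apply: connect_trans Ea; rewrite (fconnect_sym Tinj).
move/iter_findex; set k := findex _ _ _ => Hk.
have := iterTa (k./2) x; set z := iter k./2 T x => Hz.
have ok := odd_double_half k.
case Ok : (odd k) ok => /= ok.
  have ek : k = (k./2 + (k./2).+1)%N by rewrite -addnn in ok; lia.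
  rewrite ek iterD iterS -/z in Hk.
  rewrite -Hk in Hz; move/iter_inj: Hz => Hz.
  by move: (s2 (alpha z)); rewrite {2}Hz /straight eqxx.
have ek : k = (k./2 + k./2)%N by rewrite -addnn in ok; lia.
rewrite ek iterD -/z in Hk; rewrite -Hk in Hz; move/iter_inj: Hz => Hz.
by move: (a1 z); rewrite Hz eqxx.
Qed.

Lemma outT y : out (T y) = out y.
Proof. by rewrite /outgoing -same_fconnect1_r //; exact: Tinj. Qed.

Lemma oS2 y : out (sigma (sigma y)) = ~~ out y.
Proof. by rewrite -{1}(aa y) -[sigma (sigma _)]/(T (alpha y)) outT outA. Qed.

Definition eps (x : D) : rat := if out x then 1 else -1.
Variable h : D -> rat.
Hypotheses (hF : forall x, h (sigma (alpha x)) = h x)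
  (hA : forall x, h (alpha x) = h x + eps x).

Lemma hS x : h (sigma x) = h x + eps x.
Proof. by rewrite -{1}(aa x) hF hA. Qed.

Definition H (p : D * 'I_3) : (rat + D)%type :=
  let: (x, k) := p in
  match val k with
  | 0 => inl (h x)
  | 1 => if out x == out (sigma x) then inr x else inl (h (sigma x))
  | _ => if out x == out (sigma x) then inl (h x) else inr (sigma (sigma (sigma x)))
  end.

Arguments H : simpl never.
Local Notation BS := (B_sigma sigma alpha d0).
Local Notation BA := (B_alpha alpha).

Lemma i1 : val (inord 1 : 'I_3) = 1%N. Proof. exact: inordK. Qed.
Lemma i2 : val (inord 2 : 'I_3) = 2%N. Proof. exact: inordK. Qed.

Lemma BS0 x : BS (x, ord0) = if out x == out (sigma x) then (sigma x, ord0) else (x, inord 1).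
Proof. by rewrite /B_sigma. Qed.
Lemma BS1 x : BS (x, inord 1) =
  if out x == out (sigma x) then (x, ord0) else (sigma (sigma (sigma x)), inord 1).
Proof. by rewrite /B_sigma i1. Qed.
Lemma BS2 x : BS (x, inord 2) = (sigma x, inord 2).
Proof. by rewrite /B_sigma i2. Qed.
Lemma BA0 x : BA (x, ord0) = (alpha x, ord0). Proof. by rewrite /B_alpha. Qed.
Lemma BA1 x : BA (x, inord 1) = (x, inord 2). Proof. by rewrite /B_alpha i1. Qed.
Lemma BA2 x : BA (x, inord 2) = (x, inord 1). Proof. by rewrite /B_alpha i2. Qed.
Lemma H0 x : H (x, ord0) = inl (h x). Proof. by []. Qed.
Lemma H1 x : H (x, inord 1) =
  if out x == out (sigma x) then inr x else inl (h (sigma x)).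
Proof. by rewrite /H i1. Qed.
Lemma H2 x : H (x, inord 2) =
  if out x == out (sigma x) then inl (h x) else inr (sigma (sigma (sigma x))).
Proof. by rewrite /H i2. Qed.

Lemma Kcases (k : 'I_3) : k = ord0 \/ k = inord 1 \/ k = inord 2.
Proof.
case: k => [[|[|[|m]]] Hm] //.
- by left; apply: val_inj.
- by right; left; apply: val_inj; rewrite /= i1.
- by right; right; apply: val_inj; rewrite /= i2.
Qed.

Lemma Hinv p : H (BS (BA p)) = H p.
Proof.
case: p => x k; case: (Kcases k) => [->|[->|->]].
- rewrite BA0 BS0; case: ifP => E; rewrite ?H0 ?H1 ?E /= hF //.
- rewrite BA1 BS2 H2 H1 oS2 s4.
  by case: (out x); case: (out (sigma x)).
- rewrite BA2 BS1 H2; case Eo : (out x == out (sigma x)); rewrite ?H0 // H1 oS2 s4.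
  by move: Eo; case: (out x); case: (out (sigma x)).
Qed.

Lemma s_ne' x : sigma x != x.
Proof. by apply/eqP => E; move: (s2 x); rewrite !E eqxx. Qed.

Ltac simpB Eo0 Eo1 :=
  rewrite ?BS0 ?BS1 ?BS2 ?oS2 ?Eo0 ?Eo1 ?s4 /=.

Lemma Huniq d : uniq [:: H (BS d); H (BS (BS d)); H (BS (BS (BS d))); H (BS (BS (BS (BS d))))].
Proof.
case: d => x k.
have hs1 := hS x; have hs2 := hS (sigma x); have hs3 := hS (sigma (sigma x)).
have hs4 := hS (sigma (sigma (sigma x))); rewrite s4 in hs4.
rewrite /eps !oS2 in hs1 hs2 hs3 hs4.
have n1 : x != sigma x by rewrite eq_sym s_ne'.
have n2 : x != sigma (sigma x) by rewrite eq_sym s2.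
have n3 : x != sigma (sigma (sigma x)).
  by apply/eqP => E; move: (s4 x); rewrite -E => /eqP; rewrite (negbTE (s_ne' x)).
have n12 : sigma x != sigma (sigma x) by rewrite (inj_eq sinj).
have n13 : sigma x != sigma (sigma (sigma x)) by rewrite (inj_eq sinj).
have n23 : sigma (sigma x) != sigma (sigma (sigma x)) by rewrite !(inj_eq sinj).
case Eo0 : (out x) hs1 hs2 hs3 hs4; case Eo1 : (out (sigma x)) => /= hs1 hs2 hs3 hs4;
case: (Kcases k) => [->|[->|->]];
do 4 simpB Eo0 Eo1;
rewrite ?H0 ?H1 ?H2 ?oS2 ?Eo0 ?Eo1 ?s4 /= !inE !negb_or /=;
repeat (apply/andP; split); try done; apply/eqP => E; 
  (try discriminate E);
  (try (injection E; clear E; intro E; lra));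
  (try (injection E; clear E; intro E;
        first [by move: n1 n2 n3 n12 n13 n23; rewrite E ?eqxx
              | by move: n1 n2 n3 n12 n13 n23; rewrite -E ?eqxx])).
Qed.

Lemma not_red d : ~~ reducible_at BS BA d.
Proof.
apply/existsP => [[i /existsP [j /andP [ne con]]]].
have Hinv' : invariant (facep BS BA) H =1 xpredT.
  by move=> p; rewrite /= /facep Hinv eqxx.
have {con} := fconnect_invariant Hinv' con; rewrite /corner_rep.
have Hu := Huniq d.
move: ne Hu; case: i => [[|[|[|[|i]]]] Hi] //=; case: j => [[|[|[|[|j]]]] Hj] //= _ Hu E;
  by move: Hu; rewrite E /= !inE !eqxx ?orbT ?andbF.
Qed.

End P2.


Theorem proposition4 (D : finType) (sigma alpha : D -> D) (d0 : D) :
  is_knot_projection sigma alpha ->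
  reduced (B_sigma sigma alpha d0) (B_alpha alpha).
Proof.
move=> [[sinj s4 s2 Ha] [conn Fc single]].
have aa x : alpha (alpha x) = x := (Ha x).1.
have a1 x : alpha x != x := (Ha x).2.
have n0 : (0 < #|D|)%N by apply/card_gt0P; exists d0.
have Fc' := Fc n0.
have epsA x : eps sigma alpha d0 (alpha x) = - eps sigma alpha d0 x.
  by rewrite /eps (outA d0 sinj s4 s2 aa a1 single); case: (outgoing _ _ _ x).
have epsS x : eps sigma alpha d0 x + eps sigma alpha d0 (sigma x)
   + eps sigma alpha d0 (sigma (sigma x))
   + eps sigma alpha d0 (sigma (sigma (sigma x))) = 0.
  rewrite /eps !(oS2 d0 sinj s4 s2 aa a1 single).
  by case: (outgoing _ _ _ x); case: (outgoing _ _ _ (sigma x)) => /=; lra.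
have [h [hF hA]] := LA_main d0 sinj s4 s2 aa a1 conn Fc' epsA epsS.
move=> d; exact: (not_red sinj s4 s2 aa a1 single hF hA d).
Qed.
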